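(* Let $\alpha\in(0,1)\cup(1,\infty)$, let $\sigma_{A_1B_1}$ and $\tau_{A_2B_2}$ be states on finite-dimensional Hilbert spaces, and let $\rho_{A_1A_2B_1B_2}=\sigma_{A_1B_1}\otimes\tau_{A_2B_2}$. Then $$E^{\mathrm{sq}}_\alpha(A_1A_2;B_1B_2)_\rho\leq E^{\mathrm{sq}}_\alpha(A_1;B_1)_\sigma+E^{\mathrm{sq}}_\alpha(A_2;B_2)_\tau.$$
   Context: All Hilbert spaces are finite-dimensional and $\log$ is the natural logarithm. For a positive semi-definite operator $M$ and a function $f$, $f(M)$ is defined by applying $f$ only to the nonzero eigenvalues (negative powers are generalized inverses on the support). For a state $\rho_{ABE}$ and $\alpha\in(0,1)\cup(1,\infty)$, $$I_\alpha(A;B|E)_\rho=\frac{\alpha}{\alpha-1}\log\mathrm{Tr}\Big\{\Big(\rho_E^{(\alpha-1)/2}\,\mathrm{Tr}_A\big\{\rho_{AE}^{(1-\alpha)/2}\rho_{ABE}^{\alpha}\rho_{AE}^{(1-\alpha)/2}\big\}\,\rho_E^{(\alpha-1)/2}\Big)^{1/\alpha}\Big\}.$$ The Rényi squashed entanglement of a bipartite state $\rho_{AB}$ is $E^{\mathrm{sq}}_\alpha(A;B)_\rho=\frac12\inf\{I_\alpha(A;B|E)_\omega:\ \mathrm{Tr}_E\omega_{ABE}=\rho_{AB}\}$, the infimum over all extensions $\omega_{ABE}$ on any finite-dimensional $\mathcal{H}_E$. In $E^{\mathrm{sq}}_\alpha(A_1A_2;B_1B_2)$ the first party holds $A_1A_2$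 and the second $B_1B_2$. *)

(* Defs.v *)
From HB Require Import structures.
From mathcomp Require Import all_boot all_order all_algebra.
From mathcomp Require Import sesquilinear spectral.
From mathcomp Require Import all_classical all_reals all_analysis.
From mathcomp Require Import complex mxtens.

Set Implicit Arguments.
Unset Strict Implicit.
Unset Printing Implicit Defensive.

Import Order.TTheory GRing.Theory Num.Theory.
Local Open Scope ring_scope.
Local Open Scope sesquilinear_scope.

Section QuantumDefs.
Variable R : realType.
Local Notation C := R[i].

(* Composite systems use the Kronecker index convention of [mxtens]:
   the index of 'I_(m * n) corresponding to (i, j) is mxtens_index (i, j). *)

Definition hermmx n (M : 'M[C]_n) : Prop := M ^t* = M.

Definition psdmx n (M : 'M[C]_n) : Prop :=
  hermmx M /\ forall v : 'rV[C]_n, 0 <= (v *m M *m v ^t*) 0 0.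

Definition density n (M : 'M[C]_n) : Prop := psdmx M /\ \tr M = 1.

Definition spec_dec n (M : 'M[C]_n) (p : 'M[C]_n * 'rV[R]_n) : Prop :=
  p.1 \is unitarymx /\
  M = p.1 ^t* *m diag_mx (map_mx (fun x => (x%:C)%C) p.2) *m p.1.

(* f(M): apply f to the nonzero eigenvalues only (zero eigenvalues stay 0);
   defined through a chosen spectral decomposition (0 if M has none,
   which never happens for the Hermitian matrices it is applied to). *)
Definition mxfun (f : R -> R) n (M : 'M[C]_n) : 'M[C]_n :=
  match pselect (exists p, spec_dec M p) with
  | left H => let p := projT1 (cid H) in
      p.1 ^t* *m diag_mx (map_mx (fun x => ((if x == 0 then 0 else f x)%:C)%C) p.2)
          *m p.1
  | right _ => 0
  end.

(* real power M^s (generalized inverse on the support for s < 0) *)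
Definition mxpow (s : R) n (M : 'M[C]_n) : 'M[C]_n := mxfun (fun x => powR x s) M.

Definition trR m n (M : 'M[C]_(m * n)) : 'M[C]_m :=
  \matrix_(i, j) \sum_(k < n) M (mxtens_index (i, k)) (mxtens_index (j, k)).
Definition trL m n (M : 'M[C]_(m * n)) : 'M[C]_n :=
  \matrix_(i, j) \sum_(k < m) M (mxtens_index (k, i)) (mxtens_index (k, j)).

(* tripartite system A B E with index space 'I_(a * b * e) = 'I_((a * b) * e) *)
Definition idx3 a b e (i : 'I_a) (j : 'I_b) (k : 'I_e) : 'I_(a * b * e) :=
  mxtens_index (mxtens_index (i, j), k).
Definition fst3 a b e (x : 'I_(a * b * e)) : 'I_a :=
  (mxtens_unindex (mxtens_unindex x).1).1.
Definition snd3 a b e (x : 'I_(a * b * e)) : 'I_b :=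
  (mxtens_unindex (mxtens_unindex x).1).2.
Definition thd3 a b e (x : 'I_(a * b * e)) : 'I_e := (mxtens_unindex x).2.

Definition trB3 a b e (M : 'M[C]_(a * b * e)) : 'M[C]_(a * e) :=
  \matrix_(i, j) \sum_(k < b)
     M (idx3 (mxtens_unindex i).1 k (mxtens_unindex i).2)
       (idx3 (mxtens_unindex j).1 k (mxtens_unindex j).2).
Definition trA3 a b e (M : 'M[C]_(a * b * e)) : 'M[C]_(b * e) :=
  \matrix_(i, j) \sum_(k < a)
     M (idx3 k (mxtens_unindex i).1 (mxtens_unindex i).2)
       (idx3 k (mxtens_unindex j).1 (mxtens_unindex j).2).
(* X_AE (x) 1_B as an operator on ABE *)
Definition embB a b e (X : 'M[C]_(a * e)) : 'M[C]_(a * b * e) :=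
  \matrix_(i, j) (X (mxtens_index (fst3 i, thd3 i)) (mxtens_index (fst3 j, thd3 j))
                  * (snd3 i == snd3 j)%:R).

Definition renyiCMI (alpha : R) a b e (rho : 'M[C]_(a * b * e)) : R :=
  let rhoE := trL rho in
  let rhoAE := trB3 rho in
  let S := embB b (mxpow ((1 - alpha) / 2) rhoAE) in
  let Y := trA3 (S *m mxpow alpha rho *m S) in
  let T := (1%:M : 'M[C]_b) *t mxpow ((alpha - 1) / 2) rhoE in
  alpha / (alpha - 1) * ln (complex.Re (\tr (mxpow (alpha^-1) (T *m Y *m T)))).

Definition sqEnt (alpha : R) a b (rho : 'M[C]_(a * b)) : \bar R :=
  ((2^-1)%:E * ereal_inf [set x : \bar R | exists (e : nat) (w : 'M[C]_(a * b * e)),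
      density w /\ trR w = rho /\ x = (renyiCMI alpha w)%:E])%E.

(* sigma_{A1B1} (x) tau_{A2B2} regarded as a state of (A1A2)(B1B2) *)
Definition prod_state a1 b1 a2 b2 (sigma : 'M[C]_(a1 * b1)) (tau : 'M[C]_(a2 * b2))
  : 'M[C]_((a1 * a2) * (b1 * b2)) :=
  \matrix_(i, j)
    let iA := mxtens_unindex (mxtens_unindex i).1 in
    let iB := mxtens_unindex (mxtens_unindex i).2 in
    let jA := mxtens_unindex (mxtens_unindex j).1 in
    let jB := mxtens_unindex (mxtens_unindex j).2 in
    sigma (mxtens_index (iA.1, iB.1)) (mxtens_index (jA.1, jB.1))
    * tau (mxtens_index (iA.2, iB.2)) (mxtens_index (jA.2, jB.2)).

End QuantumDefs.

(* Main.v *)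
Require Import Defs.
From HB Require Import structures.
From mathcomp Require Import all_boot all_order all_algebra.
From mathcomp Require Import sesquilinear spectral.
From mathcomp Require Import all_classical all_reals all_analysis.
From mathcomp Require Import complex mxtens.
Import Order.TTheory GRing.Theory Num.Theory.
Local Open Scope ring_scope.

Module Aux.
Set Implicit Arguments.
Unset Strict Implicit.
Unset Printing Implicit Defensive.
Local Open Scope sesquilinear_scope.

Section A.
Variable R : realType.
Local Notation C := R[i].
Local Notation rc := (fun x : R => (x%:C)%C : C).

Lemma rcM (x y : R) : rc (x * y) = rc x * rc y.
Proof. exact: rmorphM. Qed.
Lemma rcD (x y : R) : rc (x + y) = rc x + rc y.
Proof. exact: rmorphD. Qed.

Lemma adjM m n p (A : 'M[C]_(m, n)) (B : 'M[C]_(n, p)) : (A *m B)^t* = B^t* *m A^t*.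
Proof. by rewrite trmx_mul map_mxM. Qed.

Lemma adj1 n : (1%:M : 'M[C]_n)^t* = 1%:M.
Proof. by rewrite trmx1 map_mx1. Qed.

Lemma unitary_l n (U : 'M[C]_n) : U \is unitarymx -> U *m U^t* = 1%:M.
Proof. by move=> /unitarymxP. Qed.

Lemma unitary_r n (U : 'M[C]_n) : U \is unitarymx -> U^t* *m U = 1%:M.
Proof. by move=> uU; rewrite -invmx_unitary // mulVmx // unitarymx_unit. Qed.

Lemma conj_rc (x : R) : Num.conj (rc x) = rc x.
Proof. exact: conjc_real. Qed.

Lemma spec_dec_fun n (M : 'M[C]_n) p1 p2 (g : R -> R) :
  spec_dec M p1 -> spec_dec M p2 ->
  p1.1^t* *m diag_mx (map_mx (fun x => rc (g x)) p1.2) *m p1.1 =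
  p2.1^t* *m diag_mx (map_mx (fun x => rc (g x)) p2.2) *m p2.1.
Proof.
case: p1 p2 => U d [V e] /= [uU eU] [uV eV].
set W := V *m U^t*.
have WU : W *m U = V by rewrite /W -mulmxA unitary_r // mulmx1.
have WV : V^t* *m W = U^t* by rewrite /W !mulmxA unitary_r // mul1mx.
have WD : W *m diag_mx (map_mx rc d) = diag_mx (map_mx rc e) *m W.
  have := congr1 (fun X => V *m X *m U^t*) (etrans (esym eU) eV).
  rewrite /= !mulmxA unitary_l // mul1mx -!mulmxA unitary_l // mulmx1.
  by rewrite /W !mulmxA.
clearbody W.
have WDg : W *m diag_mx (map_mx (fun x => rc (g x)) d) =
           diag_mx (map_mx (fun x => rc (g x)) e) *m W.
  apply/matrixP => i j; move/matrixP: WD => /(_ i j).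
  rewrite !mul_mx_diag !mul_diag_mx !mxE.
  have [->|Wn0] := eqVneq (W i j) 0; first by rewrite !mulr0 !mul0r.
  rewrite mulrC => /(mulIf Wn0) /complexI ->; by rewrite mulrC.
rewrite -{2}WU !mulmxA -(mulmxA _ _ W) -WDg.
by rewrite !mulmxA WV.
Qed.

Lemma mxfunE (f : R -> R) n (M : 'M[C]_n) p : spec_dec M p ->
  mxfun f M = p.1^t* *m diag_mx (map_mx (fun x => rc (if x == 0 then 0 else f x)) p.2) *m p.1.
Proof.
move=> sp; rewrite /mxfun; case: pselect => [H|nH]; last by exfalso; apply: nH; exists p.
apply: (spec_dec_fun (fun x => if x == 0 then 0 else f x) _ sp).
exact: (projT2 (cid H)).
Qed.


Definition sdm n (U : 'M[C]_n) (d : 'rV[R]_n) := U^t* *m diag_mx (map_mx rc d) *m U.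

Lemma adj_diag n (d : 'rV[R]_n) : (diag_mx (map_mx rc d))^t* = diag_mx (map_mx rc d).
Proof.
apply/matrixP => i j; rewrite !mxE; case: (eqVneq i j) => [->|nij].
  by rewrite mulr1n; exact: conj_rc.
by rewrite mulr0n rmorph0.
Qed.

Lemma sdm_adj n (U : 'M[C]_n) (d : 'rV[R]_n) : (sdm U d)^t* = sdm U d.
Proof. by rewrite /sdm !adjM trmxCK adj_diag mulmxA. Qed.

Lemma sdm_mul n (U : 'M[C]_n) (d1 d2 : 'rV[R]_n) : U \is unitarymx ->
  sdm U d1 *m sdm U d2 = sdm U (map2_mx *%R d1 d2).
Proof.
move=> uU; rewrite /sdm !mulmxA -(mulmxA _ U) unitary_l // mulmx1.
rewrite -(mulmxA _ _ (diag_mx _)) mulmx_diag; congr (_ *m _ *m _); congr diag_mx.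
by apply/matrixP => i j; rewrite !mxE ord1 -rcM.
Qed.

Lemma herm_spec n (M : 'M[C]_n) : hermmx M -> exists p, spec_dec M p.
Proof.
move=> hM.
have Hh : M \is hermsymmx by apply/is_hermitianmxP; rewrite expr0 scale1r hM.
have /orthomx_spectralP eM := hermitian_normalmx Hh.
have rs := hermitian_spectral_diag_real Hh.
exists (spectralmx M, map_mx (@complex.Re R) (spectral_diag M)); split => /=.
  exact: spectral_unitarymx.
rewrite -invmx_unitary ?spectral_unitarymx //.
suff -> : map_mx rc (map_mx (@complex.Re R) (spectral_diag M)) = spectral_diag M by [].
apply/matrixP => i j; rewrite !mxE RRe_real //.
by move/mxOverP: rs; apply.
Qed.

Lemma sdm_quad n (U : 'M[C]_n) (d : 'rV[R]_n) (v : 'rV[C]_n) : U \is unitarymx ->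
  (v *m sdm U d *m v^t*) 0 0 =
  \sum_k rc (d 0 k) * ((v *m U^t*) 0 k * Num.conj ((v *m U^t*) 0 k)).
Proof.
move=> uU; rewrite /sdm.
have -> : v *m (U^t* *m diag_mx (map_mx rc d) *m U) *m v^t* =
   (v *m U^t*) *m diag_mx (map_mx rc d) *m (v *m U^t*)^t*.
  by rewrite adjM trmxCK !mulmxA.
rewrite mul_mx_diag mxE; apply: eq_bigr => k _.
by rewrite !mxE mulrA [_ * rc _]mulrC.
Qed.

Lemma sdm_psd n (U : 'M[C]_n) (d : 'rV[R]_n) : U \is unitarymx -> (forall k, 0 <= d 0 k) ->
  psdmx (sdm U d).
Proof.
move=> uU d0; split; first exact: sdm_adj.
move=> v; rewrite sdm_quad //; apply: sumr_ge0 => k _.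
by apply: mulr_ge0; [rewrite ler0c | exact: mulcJ_ge0].
Qed.

Lemma sdm_diag_entry n (U : 'M[C]_n) (d : 'rV[R]_n) k : U \is unitarymx ->
  (row k U *m sdm U d *m (row k U)^t*) 0 0 = rc (d 0 k).
Proof.
move=> uU; rewrite sdm_quad // (bigD1 k) //= big1 ?addr0.
  by rewrite -row_mul unitary_l // !mxE eqxx /= mulr1n rmorph1 !mulr1.
move=> j njk; rewrite -row_mul unitary_l // !mxE eq_sym (negPf njk) /= mulr0n.
by rewrite mul0r mulr0.
Qed.

Lemma psd_spec n (M : 'M[C]_n) : psdmx M ->
  exists p, spec_dec M p /\ forall k, 0 <= p.2 0 k.
Proof.
move=> [hM qM]; have [[U d] [uU eM]] := herm_spec hM.
exists (U, d); split => //= k.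
have := qM (row k U); rewrite eM -/(sdm U d) sdm_diag_entry //.
by rewrite ler0c.
Qed.


Definition f0 (s x : R) : R := if x == 0 then 0 else powR x s.

Lemma mxpowE s n (M : 'M[C]_n) U d : spec_dec M (U, d) ->
  mxpow s M = sdm U (map_mx (f0 s) d).
Proof.
move=> sp; rewrite /mxpow (mxfunE _ sp) /sdm /=; congr (_ *m diag_mx _ *m _).
by apply/matrixP => i j; rewrite !mxE.
Qed.

Lemma f0_ge0 s x : 0 <= f0 s x.
Proof. by rewrite /f0; case: ifP => // _; exact: powR_ge0. Qed.

Lemma f0M s x y : 0 <= x -> 0 <= y -> f0 s (x * y) = f0 s x * f0 s y.
Proof.
move=> x0 y0; rewrite /f0 mulf_eq0.
case: (eqVneq x 0) => [_|xn0] /=; first by rewrite mul0r.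
case: (eqVneq y 0) => [_|yn0] /=; first by rewrite mulr0.
exact: powRM.
Qed.

Lemma f0D s t x : f0 s x * f0 t x = f0 (s + t) x.
Proof.
rewrite /f0; case: (eqVneq x 0) => [_|xn0]; first by rewrite mul0r.
by rewrite powRD // xn0 implybT.
Qed.

Lemma f01 x : 0 <= x -> f0 1 x = x.
Proof. by move=> x0; rewrite /f0; case: eqP => [->|_] //; rewrite powRr1. Qed.

Lemma f0_eq0 s x : (f0 s x == 0) = (x == 0).
Proof.
rewrite /f0; case: ifP => [_|xn0]; first by rewrite eqxx.
by rewrite powR_eq0 xn0.
Qed.

Lemma psd_pow s n (M : 'M[C]_n) : psdmx M -> psdmx (mxpow s M).
Proof.
move=> /psd_spec [[U d] [[uU eM] d0]]; rewrite (mxpowE _ (conj uU eM)).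
by apply: sdm_psd => // k; rewrite mxE f0_ge0.
Qed.

Lemma herm_pow s n (M : 'M[C]_n) : psdmx M -> hermmx (mxpow s M).
Proof. by move/(psd_pow s) => []. Qed.

Lemma mxpow_mul s t n (M : 'M[C]_n) : psdmx M ->
  mxpow s M *m mxpow t M = mxpow (s + t) M.
Proof.
move=> /psd_spec [[U d] [[uU eM] d0]].
rewrite !(mxpowE _ (conj uU eM)) (sdm_mul _ _ uU).
suff -> : map2_mx *%R (map_mx (f0 s) d) (map_mx (f0 t) d) = map_mx (f0 (s + t)) d by [].
by apply/matrixP => i j; rewrite !mxE f0D.
Qed.

Lemma mxpow1 n (M : 'M[C]_n) : psdmx M -> mxpow 1 M = M.
Proof.
move=> /psd_spec [[U d] [[uU eM] d0]].
rewrite !(mxpowE _ (conj uU eM)) [in RHS]eM /sdm.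
suff -> : map_mx (f0 1) d = d by [].
by apply/matrixP => i j; rewrite !mxE ord1 f01.
Qed.

Lemma mxpow_split s n (M : 'M[C]_n) : psdmx M -> mxpow s M = M *m mxpow (s - 1) M.
Proof.
move=> pM; rewrite -[X in X *m _](mxpow1 pM) (mxpow_mul _ _ pM).
by rewrite addrC subrK.
Qed.

Lemma mxpow_split_r s n (M : 'M[C]_n) : psdmx M -> mxpow s M = mxpow (s - 1) M *m M.
Proof.
move=> pM; rewrite -[X in _ *m X](mxpow1 pM) (mxpow_mul _ _ pM).
by rewrite subrK.
Qed.

Lemma tr_sdm n (U : 'M[C]_n) (d : 'rV[R]_n) : U \is unitarymx ->
  \tr (sdm U d) = \sum_k rc (d 0 k).
Proof.
move=> uU; rewrite /sdm mxtrace_mulC mulmxA unitary_l // mul1mx.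
by apply: eq_bigr => k _; rewrite !mxE eqxx mulr1n.
Qed.

End A.

Section B.
Variable R : realType.
Local Notation C := R[i].
Local Notation rc := (fun x : R => (x%:C)%C : C).

Record tstruct (n n1 n2 : nat) := TS {
  tp : 'I_n -> 'I_n1; tq : 'I_n -> 'I_n2; tr : 'I_n1 -> 'I_n2 -> 'I_n;
  tpK : forall a b, tp (tr a b) = a; tqK : forall a b, tq (tr a b) = b;
  trK : forall x, tr (tp x) (tq x) = x }.

Variables (n n1 n2 : nat) (S : tstruct n n1 n2).

Lemma tsum (F : 'I_n -> C) : \sum_x F x = \sum_a \sum_b F (tr S a b).
Proof.
rewrite pair_big /=.
rewrite (reindex (fun p : 'I_n1 * 'I_n2 => tr S p.1 p.2)) //=.
exists (fun x => (tp S x, tq S x)) => [[a b] _|x _] /=; first by rewrite tpK tqK.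
by rewrite trK.
Qed.

Lemma tsumR (F : 'I_n -> R) : \sum_x F x = \sum_a \sum_b F (tr S a b).
Proof.
rewrite pair_big /=.
rewrite (reindex (fun p : 'I_n1 * 'I_n2 => tr S p.1 p.2)) //=.
exists (fun x => (tp S x, tq S x)) => [[a b] _|x _] /=; first by rewrite tpK tqK.
by rewrite trK.
Qed.

Lemma tsame (x y : 'I_n) : (x == y) = (tp S x == tp S y) && (tq S x == tq S y).
Proof.
apply/eqP/andP => [->|[/eqP e1 /eqP e2]]; first by [].
by rewrite -(trK S x) -(trK S y) e1 e2.
Qed.

Definition tensP (X : 'M[C]_n1) (Y : 'M[C]_n2) : 'M[C]_n :=
  \matrix_(i, j) (X (tp S i) (tp S j) * Y (tq S i) (tq S j)).

Lemma tensP_mul X1 Y1 X2 Y2 :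
  tensP X1 Y1 *m tensP X2 Y2 = tensP (X1 *m X2) (Y1 *m Y2).
Proof.
apply/matrixP => i j; rewrite !mxE tsum big_distrlr /=.
apply: eq_bigr => a _; apply: eq_bigr => b _.
by rewrite !mxE !tpK !tqK mulrACA.
Qed.

Lemma tensP_adj X Y : (tensP X Y)^t* = tensP (X^t*) (Y^t*).
Proof. by apply/matrixP => i j; rewrite !mxE rmorphM. Qed.

Lemma tensP_tr X Y : \tr (tensP X Y) = \tr X * \tr Y.
Proof.
rewrite /mxtrace tsum big_distrlr /=.
by apply: eq_bigr => a _; apply: eq_bigr => b _; rewrite !mxE !tpK !tqK.
Qed.

Definition trow (d : 'rV[R]_n1) (e : 'rV[R]_n2) : 'rV[R]_n :=
  \row_i (d 0 (tp S i) * e 0 (tq S i)).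

Lemma tensP_diag d e :
  tensP (diag_mx (map_mx rc d)) (diag_mx (map_mx rc e)) = diag_mx (map_mx rc (trow d e)).
Proof.
apply/matrixP => i j; rewrite !mxE tsame.
case: (tp S i == tp S j); case: (tq S i == tq S j) => /=;
  by rewrite ?mulr1n ?mulr0n ?mulr0 ?mul0r ?rcM.
Qed.

Lemma tensP1 : tensP 1%:M 1%:M = 1%:M.
Proof.
apply/matrixP => i j; rewrite !mxE tsame.
by case: (tp S i == tp S j); case: (tq S i == tq S j); rewrite /= ?mulr1 ?mulr0.
Qed.

Lemma tensP_unitary U V : U \is unitarymx -> V \is unitarymx -> tensP U V \is unitarymx.
Proof.
move=> uU uV; apply/unitarymxP.
by rewrite tensP_adj tensP_mul (unitary_l uU) (unitary_l uV) tensP1.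
Qed.

Lemma tensP_sdm U V d e :
  tensP (sdm U d) (sdm V e) = sdm (tensP U V) (trow d e).
Proof.
by rewrite /sdm -!tensP_mul -tensP_diag tensP_adj.
Qed.

Lemma tensP_spec X Y U V d e : spec_dec X (U, d) -> spec_dec Y (V, e) ->
  spec_dec (tensP X Y) (tensP U V, trow d e).
Proof.
move=> [uU eX] [uV eY]; split; first exact: tensP_unitary.
by rewrite /= eX eY -/(sdm U d) -/(sdm V e) tensP_sdm.
Qed.

Lemma tensP_psd X Y : psdmx X -> psdmx Y -> psdmx (tensP X Y).
Proof.
move=> /psd_spec [[U d] [[uU eX] d0]] /psd_spec [[V e] [[uV eY]e0]].
rewrite eX eY -/(sdm U d) -/(sdm V e) tensP_sdm.
apply: sdm_psd; first exact: tensP_unitary.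
by move=> k; rewrite mxE mulr_ge0.
Qed.

Lemma tensP_pow s X Y : psdmx X -> psdmx Y ->
  mxpow s (tensP X Y) = tensP (mxpow s X) (mxpow s Y).
Proof.
move=> /psd_spec [[U d] [sX d0]] /psd_spec [[V e] [sY e0]].
rewrite (mxpowE _ (tensP_spec sX sY)) (mxpowE _ sX) (mxpowE _ sY) tensP_sdm.
suff -> : map_mx (f0 s) (trow d e) = trow (map_mx (f0 s) d) (map_mx (f0 s) e) by [].
by apply/matrixP => i j; rewrite !mxE f0M.
Qed.

End B.

Section C.
Variable R : realType.
Local Notation C := R[i].

Definition trq n n1 n2 (S : tstruct n n1 n2) (M : 'M[C]_n) : 'M[C]_n1 :=
  \matrix_(x, y) \sum_k M (tr S x k) (tr S y k).
Definition trp n n1 n2 (S : tstruct n n1 n2) (M : 'M[C]_n) : 'M[C]_n2 :=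
  \matrix_(x, y) \sum_k M (tr S k x) (tr S k y).

Section Compat.
Variables (n n1 n2 k e k1 e1 k2 e2 : nat).
Variables (Sbig : tstruct n n1 n2) (Sr : tstruct n k e) (S1 : tstruct n1 k1 e1)
  (S2 : tstruct n2 k2 e2) (SK : tstruct k k1 k2) (SE : tstruct e e1 e2).
Hypothesis compat : forall a1 a2 b1 b2,
  tr Sr (tr SK a1 a2) (tr SE b1 b2) = tr Sbig (tr S1 a1 b1) (tr S2 a2 b2).

Lemma compat_i i : i = tr Sbig (tr S1 (tp SK (tp Sr i)) (tp SE (tq Sr i)))
                             (tr S2 (tq SK (tp Sr i)) (tq SE (tq Sr i))).
Proof. by rewrite -compat !trK. Qed.

Lemma cp1 i : tp S1 (tp Sbig i) = tp SK (tp Sr i).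
Proof. by rewrite {1}(compat_i i) !tpK. Qed.
Lemma cq1 i : tq S1 (tp Sbig i) = tp SE (tq Sr i).
Proof. by rewrite {1}(compat_i i) tpK tqK. Qed.
Lemma cp2 i : tp S2 (tq Sbig i) = tq SK (tp Sr i).
Proof. by rewrite {1}(compat_i i) tqK tpK. Qed.
Lemma cq2 i : tq S2 (tq Sbig i) = tq SE (tq Sr i).
Proof. by rewrite {1}(compat_i i) !tqK. Qed.

Lemma compat_tens (A : 'M[C]_k1) (B : 'M[C]_k2) (Cm : 'M[C]_e1) (D : 'M[C]_e2) :
  tensP Sr (tensP SK A B) (tensP SE Cm D) = tensP Sbig (tensP S1 A Cm) (tensP S2 B D).
Proof.
apply/matrixP => i j; rewrite !mxE !cp1 !cq1 !cp2 !cq2.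
by rewrite mulrACA.
Qed.

Lemma compat_trp (X : 'M[C]_n1) (Y : 'M[C]_n2) :
  trp Sr (tensP Sbig X Y) = tensP SE (trp S1 X) (trp S2 Y).
Proof.
apply/matrixP => x y; rewrite !mxE (tsum SK) big_distrlr /=.
apply: eq_bigr => a1 _; apply: eq_bigr => a2 _.
rewrite !mxE -[in LHS](trK SE x) -[in LHS](trK SE y) !compat.
by rewrite !tpK !tqK.
Qed.

Lemma compat_trq (X : 'M[C]_n1) (Y : 'M[C]_n2) :
  trq Sr (tensP Sbig X Y) = tensP SK (trq S1 X) (trq S2 Y).
Proof.
apply/matrixP => x y; rewrite !mxE (tsum SE) big_distrlr /=.
apply: eq_bigr => a1 _; apply: eq_bigr => a2 _.
rewrite !mxE -[in LHS](trK SK x) -[in LHS](trK SK y) !compat.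
by rewrite !tpK !tqK.
Qed.

End Compat.

End C.

Section D.
Variable R : realType.
Local Notation C := R[i].
Local Notation u := mxtens_unindex.
Local Notation idx := mxtens_index.

Lemma uidx1 m n (a : 'I_m) (b : 'I_n) : (u (idx (a, b))).1 = a.
Proof. by rewrite mxtens_indexK. Qed.
Lemma uidx2 m n (a : 'I_m) (b : 'I_n) : (u (idx (a, b))).2 = b.
Proof. by rewrite mxtens_indexK. Qed.
Lemma idxu m n (x : 'I_(m * n)) : idx ((u x).1, (u x).2) = x.
Proof. by rewrite -surjective_pairing mxtens_unindexK. Qed.

Definition St m n : tstruct (m * n) m n :=
  @TS (m * n) m n (fun x => (u x).1) (fun x => (u x).2) (fun a b => idx (a, b))
    (@uidx1 m n) (@uidx2 m n) (@idxu m n).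

Section ProdS.
Variables (k k1 k2 e e1 e2 : nat) (SK : tstruct k k1 k2) (SE : tstruct e e1 e2).
Definition prodS_p (x : 'I_(k * e)) : 'I_(k1 * e1) := idx (tp SK (u x).1, tp SE (u x).2).
Definition prodS_q (x : 'I_(k * e)) : 'I_(k2 * e2) := idx (tq SK (u x).1, tq SE (u x).2).
Definition prodS_r (y : 'I_(k1 * e1)) (z : 'I_(k2 * e2)) : 'I_(k * e) :=
  idx (tr SK (u y).1 (u z).1, tr SE (u y).2 (u z).2).
Lemma prodS_pK y z : prodS_p (prodS_r y z) = y.
Proof. by rewrite /prodS_p /prodS_r uidx1 uidx2 !tpK idxu. Qed.
Lemma prodS_qK y z : prodS_q (prodS_r y z) = z.
Proof. by rewrite /prodS_q /prodS_r uidx1 uidx2 !tqK idxu. Qed.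
Lemma prodS_rK x : prodS_r (prodS_p x) (prodS_q x) = x.
Proof. by rewrite /prodS_p /prodS_q /prodS_r !uidx1 !uidx2 !trK idxu. Qed.
Definition prodS : tstruct (k * e) (k1 * e1) (k2 * e2) :=
  TS prodS_pK prodS_qK prodS_rK.

Lemma compat_prodS : forall a1 a2 b1 b2,
  tr (St k e) (tr SK a1 a2) (tr SE b1 b2) =
  tr prodS (tr (St k1 e1) a1 b1) (tr (St k2 e2) a2 b2).
Proof. by move=> a1 a2 b1 b2; rewrite /= /prodS_r !uidx1 !uidx2. Qed.
End ProdS.

Section S3.
Variables (a b e : nat).
Definition SB3_p (x : 'I_(a * b * e)) : 'I_(a * e) := idx (fst3 x, thd3 x).
Definition SB3_r (y : 'I_(a * e)) (k : 'I_b) : 'I_(a * b * e) := idx3 (u y).1 k (u y).2.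
Lemma SB3_pK y k : SB3_p (SB3_r y k) = y.
Proof. by rewrite /SB3_p /SB3_r /fst3 /thd3 /idx3 !uidx1 !uidx2 idxu. Qed.
Lemma SB3_qK y k : snd3 (SB3_r y k) = k.
Proof. by rewrite /SB3_r /snd3 /idx3 !uidx1 !uidx2. Qed.
Lemma SB3_rK x : SB3_r (SB3_p x) (snd3 x) = x.
Proof.
rewrite /SB3_p /SB3_r /fst3 /snd3 /thd3 /idx3 !uidx1 !uidx2.
by rewrite idxu idxu.
Qed.
Definition SB3 : tstruct (a * b * e) (a * e) b := TS SB3_pK SB3_qK SB3_rK.

Definition SA3_q (x : 'I_(a * b * e)) : 'I_(b * e) := idx (snd3 x, thd3 x).
Definition SA3_r (k : 'I_a) (y : 'I_(b * e)) : 'I_(a * b * e) := idx3 k (u y).1 (u y).2.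
Lemma SA3_pK k y : fst3 (SA3_r k y) = k.
Proof. by rewrite /SA3_r /fst3 /idx3 !uidx1. Qed.
Lemma SA3_qK k y : SA3_q (SA3_r k y) = y.
Proof. by rewrite /SA3_q /SA3_r /snd3 /thd3 /idx3 !uidx1 !uidx2 idxu. Qed.
Lemma SA3_rK x : SA3_r (fst3 x) (SA3_q x) = x.
Proof.
rewrite /SA3_q /SA3_r /fst3 /snd3 /thd3 /idx3 !uidx1 !uidx2.
by rewrite idxu idxu.
Qed.
Definition SA3 : tstruct (a * b * e) a (b * e) := TS SA3_pK SA3_qK SA3_rK.

Lemma trB3E (M : 'M[C]_(a * b * e)) : trB3 M = trq SB3 M.
Proof. by apply/matrixP => i j; rewrite !mxE. Qed.
Lemma trA3E (M : 'M[C]_(a * b * e)) : trA3 M = trp SA3 M.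
Proof. by apply/matrixP => i j; rewrite !mxE. Qed.
Lemma embBE (X : 'M[C]_(a * e)) : embB b X = tensP SB3 X 1%:M.
Proof. by apply/matrixP => i j; rewrite !mxE. Qed.
End S3.

Lemma trLE m n (M : 'M[C]_(m * n)) : trL M = trp (St m n) M.
Proof. by apply/matrixP => i j; rewrite !mxE. Qed.
Lemma trRE m n (M : 'M[C]_(m * n)) : trR M = trq (St m n) M.
Proof. by apply/matrixP => i j; rewrite !mxE. Qed.
Lemma tensmxE' m n (A : 'M[C]_m) (B : 'M[C]_n) : A *t B = tensP (St m n) A B.
Proof. by apply/matrixP => i j; rewrite !mxE. Qed.

Section Big.
Variables (a1 b1 e1 a2 b2 e2 : nat).
Definition SAB := prodS (St a1 a2) (St b1 b2).
Definition Sbig := prodS SAB (St e1 e2).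
Definition SAE := prodS (St a1 a2) (St e1 e2).
Definition SBE := prodS (St b1 b2) (St e1 e2).

Lemma prod_stateE (sigma : 'M[C]_(a1 * b1)) (tau : 'M[C]_(a2 * b2)) :
  prod_state sigma tau = tensP SAB sigma tau.
Proof. by apply/matrixP => i j; rewrite !mxE. Qed.

Lemma compat_B3 : forall x1 x2 y1 y2,
  tr (SB3 (a1 * a2) (b1 * b2) (e1 * e2)) (tr SAE x1 x2) (tr (St b1 b2) y1 y2) =
  tr Sbig (tr (SB3 a1 b1 e1) x1 y1) (tr (SB3 a2 b2 e2) x2 y2).
Proof.
move=> x1 x2 y1 y2.
rewrite /= /SB3_r /prodS_r /idx3 !uidx1 !uidx2 /=.
by rewrite /prodS_r !uidx1 !uidx2.
Qed.

Lemma compat_A3 : forall x1 x2 y1 y2,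
  tr (SA3 (a1 * a2) (b1 * b2) (e1 * e2)) (tr (St a1 a2) x1 x2) (tr SBE y1 y2) =
  tr Sbig (tr (SA3 a1 b1 e1) x1 y1) (tr (SA3 a2 b2 e2) x2 y2).
Proof.
move=> x1 x2 y1 y2.
rewrite /= /SA3_r /prodS_r /idx3 !uidx1 !uidx2 /=.
by rewrite /prodS_r !uidx1 !uidx2.
Qed.
End Big.

End D.

Section E.
Variable R : realType.
Local Notation C := R[i].
Local Notation rc := (fun x : R => (x%:C)%C : C).

Lemma psd_cong m n (A : 'M[C]_(m, n)) (M : 'M[C]_n) : psdmx M -> psdmx (A *m M *m A^t*).
Proof.
move=> [hM qM]; split.
  by rewrite /hermmx !adjM trmxCK hM mulmxA.
move=> v; have := qM (v *m A); rewrite !adjM !mulmxA.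
by [].
Qed.

Lemma adjD m n (A B : 'M[C]_(m, n)) : (A + B)^t* = A^t* + B^t*.
Proof. by rewrite linearD map_mxD. Qed.

Lemma psd0 n : psdmx (0 : 'M[C]_n).
Proof.
split; first by rewrite /hermmx trmx0 map_mx0.
by move=> v; rewrite mulmx0 mul0mx mxE.
Qed.

Lemma psdD n (A B : 'M[C]_n) : psdmx A -> psdmx B -> psdmx (A + B).
Proof.
move=> [hA qA] [hB qB]; split; first by rewrite /hermmx adjD hA hB.
by move=> v; rewrite mulmxDr mulmxDl mxE addr_ge0.
Qed.

Lemma psd_sum n (I : finType) (F : I -> 'M[C]_n) : (forall i, psdmx (F i)) ->
  psdmx (\sum_i F i).
Proof.
move=> pF; apply: (big_ind (@psdmx R n)); [exact: psd0 | exact: psdD | by []].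
Qed.


Lemma sum_delta n (F : 'I_n -> C) z0 : \sum_z ((z0 == z)%:R * F z) = F z0.
Proof.
rewrite (bigD1 z0) //= eqxx mul1r big1 ?addr0 // => z nz.
by rewrite eq_sym (negPf nz) mul0r.
Qed.

Lemma sum_delta_r n (F : 'I_n -> C) z0 : \sum_z (F z * (z == z0)%:R) = F z0.
Proof.
rewrite (bigD1 z0) //= eqxx mulr1 big1 ?addr0 // => z nz.
by rewrite (negPf nz) mulr0.
Qed.

Section Gen.
Variables (n n1 n2 : nat) (S : tstruct n n1 n2).

Definition Phi (k : 'I_n2) : 'M[C]_(n1, n) := \matrix_(x, z) ((tr S x k == z)%:R).

Lemma Phi_mul k (M : 'M[C]_n) : Phi k *m M = \matrix_(x, w) M (tr S x k) w.
Proof.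
apply/matrixP => x w; rewrite !mxE; under eq_bigr do rewrite /Phi mxE.
exact: (sum_delta (fun z => M z w)).
Qed.

Lemma trq_cong (M : 'M[C]_n) : trq S M = \sum_k (Phi k *m M *m (Phi k)^t*).
Proof.
apply/matrixP => x y; rewrite !mxE summxE; apply: eq_bigr => k _.
rewrite Phi_mul mxE; under eq_bigr do rewrite ?mxE /Phi ?mxE.
rewrite -(sum_delta_r (fun w => M (tr S x k) w) (tr S y k)).
apply: eq_bigr => w _; congr (_ * _).
by rewrite (eq_sym (tr S y k)); case: (w == tr S y k); rewrite /= ?rmorph1 ?rmorph0.
Qed.

Lemma psd_trq (M : 'M[C]_n) : psdmx M -> psdmx (trq S M).
Proof. by move=> pM; rewrite trq_cong; apply: psd_sum => k; apply: psd_cong. Qed.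

Lemma tr_trq (M : 'M[C]_n) : \tr (trq S M) = \tr M.
Proof.
rewrite /mxtrace (tsum S); apply: eq_bigr => a _; rewrite mxE.
by [].
Qed.

Lemma trq_mull (X : 'M[C]_n1) (M : 'M[C]_n) :
  trq S (tensP S X 1%:M *m M) = X *m trq S M.
Proof.
apply/matrixP => x y; rewrite !mxE.
under eq_bigr do rewrite mxE (tsum S).
under [RHS]eq_bigr do rewrite mxE mulr_sumr.
rewrite exchange_big /=; apply: eq_bigr => a _.
apply: eq_bigr => k _.
under eq_bigr do rewrite !mxE !tpK !tqK.
rewrite -(sum_delta_r (fun b => X x a * M (tr S a b) (tr S y k)) k).
apply: eq_bigr => b _.
by rewrite (eq_sym b k); case: (k == b); rewrite /= ?mulr1 ?mulr0 ?mul0r ?mul1r.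
Qed.

Lemma trq_mulr (X : 'M[C]_n1) (M : 'M[C]_n) :
  trq S (M *m tensP S X 1%:M) = trq S M *m X.
Proof.
apply/matrixP => x y; rewrite !mxE.
under eq_bigr do rewrite mxE (tsum S).
under [RHS]eq_bigr do rewrite mxE mulr_suml.
rewrite exchange_big /=; apply: eq_bigr => a _.
apply: eq_bigr => k _.
under eq_bigr do rewrite !mxE !tpK !tqK.
rewrite -(sum_delta_r (fun b => M (tr S x k) (tr S a b) * X a y) k).
apply: eq_bigr => b _.
by case: (b == k); rewrite /= ?mulr1 ?mulr0 ?mul0r ?mul1r.
Qed.

Lemma tr_dual (X : 'M[C]_n1) (M : 'M[C]_n) :
  \tr (tensP S X 1%:M *m M) = \tr (X *m trq S M).
Proof. by rewrite -trq_mull tr_trq. Qed.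

End Gen.

Section Swap.
Variables (n n1 n2 : nat) (S : tstruct n n1 n2).
Lemma swap_pK a b : tq S (tr S b a) = a. Proof. exact: tqK. Qed.
Lemma swap_qK a b : tp S (tr S b a) = b. Proof. exact: tpK. Qed.
Lemma swap_rK x : tr S (tp S x) (tq S x) = x. Proof. exact: trK. Qed.
Definition swapS : tstruct n n2 n1 :=
  @TS n n2 n1 (tq S) (tp S) (fun a b => tr S b a) swap_pK swap_qK swap_rK.

Lemma trp_swap (M : 'M[C]_n) : trp S M = trq swapS M.
Proof. by apply/matrixP => x y; rewrite !mxE. Qed.

Lemma tensP_swap (X : 'M[C]_n1) (Y : 'M[C]_n2) : tensP S X Y = tensP swapS Y X.
Proof. by apply/matrixP => x y; rewrite !mxE mulrC. Qed.
End Swap.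

End E.

Section F.
Variable R : realType.
Local Notation C := R[i].
Local Notation rc := (fun x : R => (x%:C)%C : C).

Lemma sdm0 n (U : 'M[C]_n) : sdm U 0 = 0.
Proof.
rewrite /sdm; have -> : diag_mx (map_mx rc (0 : 'rV[R]_n)) = 0.
  by apply/matrixP => i j; rewrite !mxE mul0rn.
by rewrite mulmx0 mul0mx.
Qed.

Lemma psd_tr0 n (K : 'M[C]_n) : psdmx K -> \tr K = 0 -> K = 0.
Proof.
move=> /psd_spec [[U d] [[uU eK] d0]] /=; rewrite eK -/(sdm U d) tr_sdm //.
rewrite -rmorph_sum => /complexI /eqP; rewrite psumr_eq0 //.
move=> /allP dz.
have -> : d = 0.
  apply/matrixP => i j; rewrite ord1 mxE; apply/eqP.
  by apply: dz; rewrite mem_index_enum.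
exact: sdm0.
Qed.

Lemma psd_kill m n (A : 'M[C]_(m, n)) (K : 'M[C]_n) : psdmx K ->
  A *m K *m A^t* = 0 -> A *m K = 0.
Proof.
move=> /psd_spec [[U d] [[uU eK] d0]] /=; rewrite eK.
set W := A *m U^t*.
have AK : A *m (U^t* *m diag_mx (map_mx rc d) *m U) = W *m diag_mx (map_mx rc d) *m U.
  by rewrite /W !mulmxA.
have -> : A *m (U^t* *m diag_mx (map_mx rc d) *m U) *m A^t* =
          W *m diag_mx (map_mx rc d) *m W^t*.
  by rewrite /W adjM trmxCK !mulmxA.
rewrite AK; clearbody W => H.
have WD : W *m diag_mx (map_mx rc d) = 0.
  apply/matrixP => i k; rewrite mul_mx_diag !mxE.
  move/matrixP: H => /(_ i i); rewrite mxE mxE => /eqP.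
  rewrite psumr_eq0; last first.
    move=> j _; rewrite mul_mx_diag !mxE mulrAC.
    by apply: mulr_ge0; [exact: mulcJ_ge0 | rewrite ler0c].
  move=> /allP /(_ k (mem_index_enum k)); rewrite mul_mx_diag !mxE mulrAC.
  rewrite mulf_eq0 => /orP [|/eqP ->]; last by rewrite mulr0.
  rewrite mulf_eq0 => /orP [/eqP ->|]; first by rewrite mul0r.
  by rewrite conjc_eq0 => /eqP ->; rewrite mul0r.
by rewrite WD mul0mx.
Qed.


Lemma tensPBl n n1 n2 (S : tstruct n n1 n2) (X Y : 'M[C]_n1) (Z : 'M[C]_n2) :
  tensP S (X - Y) Z = tensP S X Z - tensP S Y Z.
Proof. by apply/matrixP => i j; rewrite !mxE mulrBl. Qed.

Lemma adjB n (A B : 'M[C]_n) : (A - B)^t* = A^t* - B^t*.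
Proof. by rewrite linearB map_mxB. Qed.

Lemma support_trq n n1 n2 (S : tstruct n n1 n2) (M : 'M[C]_n) : psdmx M ->
  tensP S (mxpow 0 (trq S M)) 1%:M *m M = M.
Proof.
move=> pM; have pr := psd_trq S pM.
set rho := trq S M in pr *; set P := mxpow 0 rho.
have hP : P^t* = P by exact: herm_pow.
have PP : P *m P = P by rewrite /P (mxpow_mul _ _ pr) addr0.
have Pr : P *m rho = rho.
  by rewrite /P -[X in _ *m X](mxpow1 pr) (mxpow_mul _ _ pr) add0r (mxpow1 pr).
set N := 1%:M - P.
have hN : N^t* = N by rewrite /N adjB adj1 hP.
have NN : N *m N = N.
  by rewrite /N mulmxBl mul1mx mulmxBr mulmx1 PP subrr subr0.
have Nr : N *m rho = 0 by rewrite /N mulmxBl mul1mx Pr subrr.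
set G := tensP S N 1%:M.
have hG : G^t* = G by rewrite /G tensP_adj hN adj1.
have GG : G *m G = G by rewrite /G tensP_mul NN mulmx1.
have GM : G *m M = 0.
  apply: psd_kill => //; apply: psd_tr0; first exact: psd_cong.
  rewrite mxtrace_mulC mulmxA hG GG /G tr_dual Nr.
  exact: mxtrace0.
have -> : tensP S P 1%:M = 1%:M - G.
  by rewrite /G -(@tensP1 R _ _ _ S) -tensPBl /N opprB addrC subrK.
by rewrite mulmxBl mul1mx GM subr0.
Qed.

Lemma support_trp n n1 n2 (S : tstruct n n1 n2) (M : 'M[C]_n) : psdmx M ->
  tensP S 1%:M (mxpow 0 (trp S M)) *m M = M.
Proof. by move=> pM; rewrite tensP_swap trp_swap support_trq. Qed.

End F.

Section G.
Variable R : realType.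
Local Notation C := R[i].
Local Notation rc := (fun x : R => (x%:C)%C : C).

Definition cmiS (alpha : R) a b e (rho : 'M[C]_(a * b * e)) : 'M[C]_(a * b * e) :=
  embB b (mxpow ((1 - alpha) / 2) (trB3 rho)).
Definition cmiY (alpha : R) a b e (rho : 'M[C]_(a * b * e)) : 'M[C]_(b * e) :=
  trA3 (cmiS alpha rho *m mxpow alpha rho *m cmiS alpha rho).
Definition cmiT (alpha : R) a b e (rho : 'M[C]_(a * b * e)) : 'M[C]_(b * e) :=
  (1%:M : 'M[C]_b) *t mxpow ((alpha - 1) / 2) (trL rho).
Definition cmiX (alpha : R) a b e (rho : 'M[C]_(a * b * e)) : 'M[C]_(b * e) :=
  cmiT alpha rho *m cmiY alpha rho *m cmiT alpha rho.

Lemma renyiCMIE alpha a b e (rho : 'M[C]_(a * b * e)) :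
  renyiCMI alpha rho = alpha / (alpha - 1) *
    ln (complex.Re (\tr (mxpow alpha^-1 (cmiX alpha rho)))).
Proof. by []. Qed.

Lemma psd_trp n n1 n2 (S : tstruct n n1 n2) (M : 'M[C]_n) : psdmx M -> psdmx (trp S M).
Proof. by move=> pM; rewrite trp_swap; apply: psd_trq. Qed.

Section Psd.
Variables (alpha : R) (a b e : nat) (rho : 'M[C]_(a * b * e)).
Hypothesis prho : psdmx rho.

Lemma psd_rhoE : psdmx (trL rho).
Proof. by rewrite trLE; apply: psd_trp. Qed.
Lemma psd_rhoAE : psdmx (trB3 rho).
Proof. by rewrite trB3E; apply: psd_trq. Qed.

Lemma herm_cmiS : (cmiS alpha rho)^t* = cmiS alpha rho.
Proof.
rewrite /cmiS embBE tensP_adj adj1.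
by rewrite (herm_pow _ psd_rhoAE).
Qed.

Lemma herm_cmiT : (cmiT alpha rho)^t* = cmiT alpha rho.
Proof.
rewrite /cmiT tensmxE' tensP_adj adj1.
by rewrite (herm_pow _ psd_rhoE).
Qed.

Lemma psd_cmiZ : psdmx (cmiS alpha rho *m mxpow alpha rho *m cmiS alpha rho).
Proof.
by rewrite -{2}herm_cmiS; apply: psd_cong; apply: psd_pow.
Qed.

Lemma psd_cmiY : psdmx (cmiY alpha rho).
Proof. by rewrite /cmiY trA3E; apply: psd_trp; exact: psd_cmiZ. Qed.

Lemma psd_cmiX : psdmx (cmiX alpha rho).
Proof.
by rewrite /cmiX -{2}herm_cmiT; apply: psd_cong; exact: psd_cmiY.
Qed.
End Psd.


Section Tens.
Variables (alpha : R) (a1 b1 e1 a2 b2 e2 : nat).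
Variables (w1 : 'M[C]_(a1 * b1 * e1)) (w2 : 'M[C]_(a2 * b2 * e2)).
Hypotheses (p1 : psdmx w1) (p2 : psdmx w2).
Local Notation SB := (Sbig a1 b1 e1 a2 b2 e2).
Local Notation w := (tensP SB w1 w2).

Lemma tens_rhoE : trL w = tensP (St e1 e2) (trL w1) (trL w2).
Proof.
rewrite !trLE; apply: compat_trp.
exact: (compat_prodS (SAB a1 b1 a2 b2) (St e1 e2)).
Qed.

Lemma tens_rhoAE : trB3 w = tensP (SAE a1 e1 a2 e2) (trB3 w1) (trB3 w2).
Proof.
rewrite !trB3E; apply: compat_trq.
exact: compat_B3.
Qed.

Lemma tens_cmiS : cmiS alpha w = tensP SB (cmiS alpha w1) (cmiS alpha w2).
Proof.
rewrite /cmiS tens_rhoAE tensP_pow; [|exact: psd_rhoAE|exact: psd_rhoAE].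
rewrite !embBE -(@tensP1 R _ _ _ (St b1 b2)).
apply: compat_tens; exact: compat_B3.
Qed.

Lemma tens_cmiY : cmiY alpha w = tensP (SBE b1 e1 b2 e2) (cmiY alpha w1) (cmiY alpha w2).
Proof.
rewrite /cmiY tens_cmiS tensP_pow // !tensP_mul !trA3E.
apply: compat_trp; exact: compat_A3.
Qed.

Lemma tens_cmiT : cmiT alpha w = tensP (SBE b1 e1 b2 e2) (cmiT alpha w1) (cmiT alpha w2).
Proof.
rewrite /cmiT tens_rhoE tensP_pow; [|exact: psd_rhoE|exact: psd_rhoE].
rewrite !tensmxE' -(@tensP1 R _ _ _ (St b1 b2)).
apply: compat_tens; exact: (compat_prodS (St b1 b2) (St e1 e2)).
Qed.

Lemma tens_cmiX : cmiX alpha w = tensP (SBE b1 e1 b2 e2) (cmiX alpha w1) (cmiX alpha w2).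
Proof. by rewrite /cmiX tens_cmiY tens_cmiT !tensP_mul. Qed.

End Tens.

End G.

Section H.
Variable R : realType.
Local Notation C := R[i].
Local Notation rc := (fun x : R => (x%:C)%C : C).

Lemma tr_pow_real s n (X : 'M[C]_n) : psdmx X ->
  \tr (mxpow s X) = rc (complex.Re (\tr (mxpow s X))).
Proof.
move=> /psd_spec [[U d] [sp d0]]; rewrite (mxpowE _ sp) tr_sdm; last by case: sp.
by rewrite -rmorph_sum.
Qed.

Lemma tr_pow_pos s n (X : 'M[C]_n) : psdmx X -> X != 0 ->
  0 < complex.Re (\tr (mxpow s X)).
Proof.
move=> /psd_spec [[U d] [sp d0]] Xn0.
have [k dk] : exists k, d 0 k != 0.
  apply/existsP; apply: contraNT Xn0; rewrite negb_exists => /forallP dz.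
  case: sp => uU ->; rewrite -/(sdm U d).
  have -> : d = 0.
    by apply/matrixP => i j; rewrite ord1 mxE; apply/eqP; move: (dz j); rewrite negbK.
  by rewrite sdm0.
rewrite (mxpowE _ sp) tr_sdm; last by case: sp.
rewrite -rmorph_sum /= (bigD1 k) //= mxE.
apply: (@lt_le_trans _ _ (f0 s (d 0 k))).
  rewrite /f0 (negPf dk); apply: powR_gt0.
  by rewrite lt_def dk d0.
rewrite lerDl; apply: sumr_ge0 => j _; rewrite mxE; exact: f0_ge0.
Qed.


Lemma trL_trB3 a b e (rho : 'M[C]_(a * b * e)) : trL (trB3 rho) = trL rho.
Proof.
apply/matrixP => i j; rewrite !mxE (tsum (St a b)); apply: eq_bigr => k _.
rewrite mxE; apply: eq_bigr => kb _.
by rewrite !mxtens_indexK.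
Qed.

Lemma trp_mull n n1 n2 (S : tstruct n n1 n2) (X : 'M[C]_n2) (M : 'M[C]_n) :
  trp S (tensP S 1%:M X *m M) = X *m trp S M.
Proof. by rewrite !trp_swap tensP_swap trq_mull. Qed.

Lemma tr_trp n n1 n2 (S : tstruct n n1 n2) (M : 'M[C]_n) : \tr (trp S M) = \tr M.
Proof. by rewrite trp_swap tr_trq. Qed.

Lemma tpSt m n (x : 'I_(m * n)) : tp (St m n) x = (mxtens_unindex x).1. Proof. by []. Qed.
Lemma tqSt m n (x : 'I_(m * n)) : tq (St m n) x = (mxtens_unindex x).2. Proof. by []. Qed.
Lemma tpSB3 a b e (x : 'I_(a * b * e)) : tp (SB3 a b e) x = mxtens_index (fst3 x, thd3 x).
Proof. by []. Qed.
Lemma tqSB3 a b e (x : 'I_(a * b * e)) : tq (SB3 a b e) x = snd3 x. Proof. by []. Qed.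
Lemma tpSA3 a b e (x : 'I_(a * b * e)) : tp (SA3 a b e) x = fst3 x. Proof. by []. Qed.
Lemma tqSA3 a b e (x : 'I_(a * b * e)) : tq (SA3 a b e) x = mxtens_index (snd3 x, thd3 x).
Proof. by []. Qed.

Lemma QE_idx a b e (P : 'M[C]_e) :
  tensP (SA3 a b e) 1%:M (tensP (St b e) 1%:M P) =
  tensP (SB3 a b e) (tensP (St a e) 1%:M P) 1%:M.
Proof.
apply/matrixP => i j; rewrite !mxE.
rewrite !tpSA3 !tqSA3 !tpSB3 !tqSB3 !tpSt !tqSt !mxtens_indexK.
by rewrite /= -mulrA (mulrC (P _ _)).
Qed.


Lemma chain_nz n (Q ra S S' : 'M[C]_n) : Q *m ra = ra -> ra *m Q = ra ->
  S' *m S = Q -> S *m S' = Q -> ra != 0 -> S *m ra *m S != 0.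
Proof.
move=> Qra raQ S'S SS' ra0; apply: contraNneq ra0 => Z0.
have : S' *m (S *m ra *m S) *m S' = ra.
  by rewrite !mulmxA S'S -mulmxA SS' Qra raQ.
by rewrite Z0 mulmx0 mul0mx => <-.
Qed.

Lemma adj_fix n (A B : 'M[C]_n) : A^t* = A -> B^t* = B -> A *m B = B -> B *m A = B.
Proof. by move=> hA hB AB; rewrite -[LHS]trmxCK adjM hA hB AB hB. Qed.

Section Pos.
Variables (alpha : R) (a b e : nat) (rho : 'M[C]_(a * b * e)).
Hypothesis drho : density rho.

Lemma cmiX_neq0 : cmiX alpha rho != 0.
Proof.
have prho : psdmx rho by case: drho.
have prAE := psd_rhoAE prho.
have prE := psd_rhoE prho.
have Qr : tensP (SB3 a b e) (mxpow 0 (trB3 rho)) 1%:M *m rho = rho.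
  by rewrite trB3E; apply: support_trq.
have hQ : (tensP (SB3 a b e) (mxpow 0 (trB3 rho)) 1%:M)^t* =
          tensP (SB3 a b e) (mxpow 0 (trB3 rho)) 1%:M.
  by rewrite tensP_adj adj1 (herm_pow _ prAE).
have hra : (mxpow alpha rho)^t* = mxpow alpha rho by exact: herm_pow.
have Qra : tensP (SB3 a b e) (mxpow 0 (trB3 rho)) 1%:M *m mxpow alpha rho = mxpow alpha rho.
  by rewrite (mxpow_split alpha prho) mulmxA Qr.
have ra0 : mxpow alpha rho != 0.
  apply/eqP => ra0; move: drho => [_]; apply/eqP.
  have -> : rho = mxpow alpha rho *m mxpow (1 - alpha) rho.
    by rewrite (mxpow_mul _ _ prho) addrC subrK (mxpow1 prho).
  by rewrite ra0 mul0mx mxtrace0 eq_sym oner_eq0.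
have Z0 : cmiS alpha rho *m mxpow alpha rho *m cmiS alpha rho != 0.
  rewrite /cmiS embBE.
  apply: (chain_nz Qra (adj_fix hQ hra Qra)
     (S' := tensP (SB3 a b e) (mxpow (- ((1 - alpha) / 2)) (trB3 rho)) 1%:M)) => //.
    by rewrite tensP_mul (mxpow_mul _ _ prAE) addNr mulmx1.
  by rewrite tensP_mul (mxpow_mul _ _ prAE) addrN mulmx1.
have pZ := psd_cmiZ alpha prho.
have Y0 : cmiY alpha rho != 0.
  apply: contraNneq Z0 => Y0; apply/eqP; apply: (psd_tr0 pZ).
  by rewrite -(tr_trp (SA3 a b e)) -trA3E -/(cmiY alpha rho) Y0 mxtrace0.
have supp : tensP (St a e) 1%:M (mxpow 0 (trL rho)) *m trB3 rho = trB3 rho.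
  have := support_trp (St a e) prAE.
  by rewrite -trLE trL_trB3.
have KK : tensP (St a e) 1%:M (mxpow 0 (trL rho)) *m mxpow ((1 - alpha) / 2) (trB3 rho) =
          mxpow ((1 - alpha) / 2) (trB3 rho).
  by rewrite (mxpow_split _ prAE) mulmxA supp.
have QS : tensP (SA3 a b e) 1%:M (tensP (St b e) 1%:M (mxpow 0 (trL rho))) *m cmiS alpha rho
          = cmiS alpha rho.
  by rewrite (QE_idx a b (mxpow 0 (trL rho))) /cmiS embBE tensP_mul KK mulmx1.
have QEY : tensP (St b e) 1%:M (mxpow 0 (trL rho)) *m cmiY alpha rho = cmiY alpha rho.
  rewrite /cmiY trA3E -(trp_mull (SA3 a b e)).
  by rewrite !mulmxA QS.
have hY : (cmiY alpha rho)^t* = cmiY alpha rho by case: (psd_cmiY alpha prho).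
have hQE : (tensP (St b e) 1%:M (mxpow 0 (trL rho)))^t* =
           tensP (St b e) 1%:M (mxpow 0 (trL rho)).
  by rewrite tensP_adj adj1 (herm_pow _ prE).
rewrite /cmiX /cmiT tensmxE'.
apply: (chain_nz QEY (adj_fix hQE hY QEY)
   (S' := tensP (St b e) 1%:M (mxpow (- ((alpha - 1) / 2)) (trL rho)))) => //.
  by rewrite tensP_mul (mxpow_mul _ _ prE) addNr mulmx1.
by rewrite tensP_mul (mxpow_mul _ _ prE) addrN mulmx1.
Qed.

End Pos.

End H.

Section I.
Variable R : realType.
Local Notation C := R[i].
Local Notation rc := (fun x : R => (x%:C)%C : C).

Lemma psd1 n : psdmx (1%:M : 'M[C]_n).
Proof.
split; first exact: adj1.
move=> v; rewrite mulmx1 mxE; apply: sumr_ge0 => k _; rewrite !mxE.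
exact: mulcJ_ge0.
Qed.

Lemma trq_tens n n1 n2 (S : tstruct n n1 n2) (X : 'M[C]_n1) (Y : 'M[C]_n2) :
  trq S (tensP S X Y) = \tr Y *: X.
Proof.
apply/matrixP => x y; rewrite !mxE /mxtrace mulr_suml; apply: eq_bigr => k _.
by rewrite !mxE !tpK !tqK mulrC.
Qed.

Lemma density_tens n n1 n2 (S : tstruct n n1 n2) (X : 'M[C]_n1) (Y : 'M[C]_n2) :
  density X -> density Y -> density (tensP S X Y).
Proof.
move=> [pX tX] [pY tY]; split; first exact: tensP_psd.
by rewrite tensP_tr tX tY mulr1.
Qed.

Lemma triv_ext a b (sigma : 'M[C]_(a * b)) : density sigma ->
  exists (e : nat) (w : 'M[C]_(a * b * e)), density w /\ trR w = sigma.
Proof.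
move=> ds; exists 1%N, (tensP (St (a * b) 1) sigma 1%:M); split.
  by apply: density_tens => //; split; [exact: psd1 | rewrite mxtrace1].
by rewrite trRE trq_tens mxtrace1 scale1r.
Qed.

Section Add.
Variables (alpha : R) (a1 b1 e1 a2 b2 e2 : nat).
Variables (w1 : 'M[C]_(a1 * b1 * e1)) (w2 : 'M[C]_(a2 * b2 * e2)).
Hypotheses (d1 : density w1) (d2 : density w2).

Lemma cmi_add : renyiCMI alpha (tensP (Sbig a1 b1 e1 a2 b2 e2) w1 w2) =
  renyiCMI alpha w1 + renyiCMI alpha w2.
Proof.
have [p1 _] := d1; have [p2 _] := d2.
have pX1 := psd_cmiX alpha p1; have pX2 := psd_cmiX alpha p2.
rewrite !renyiCMIE (tens_cmiX _ p1 p2) (tensP_pow _ _ pX1 pX2) tensP_tr.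
rewrite (tr_pow_real _ pX1) (tr_pow_real _ pX2) -rcM /=.
rewrite lnM ?mulrDr //; rewrite posrE; apply: tr_pow_pos => //; exact: cmiX_neq0.
Qed.

Lemma trR_tens : trR (tensP (Sbig a1 b1 e1 a2 b2 e2) w1 w2) = prod_state (trR w1) (trR w2).
Proof.
rewrite prod_stateE !trRE; apply: compat_trq.
exact: (compat_prodS (SAB a1 b1 a2 b2) (St e1 e2)).
Qed.
End Add.

End I.

Section J.
Variable R : realType.
Local Open Scope ereal_scope.

Lemma inf_add (A A1 A2 : set (\bar R)) :
  (exists x, A1 x) -> (exists x, A2 x) ->
  (forall x, A1 x -> x \is a fin_num) -> (forall x, A2 x -> x \is a fin_num) ->
  (forall x1 x2, A1 x1 -> A2 x2 -> A (x1 + x2)) ->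
  ereal_inf A <= ereal_inf A1 + ereal_inf A2.
Proof.
move=> [y1 Ay1] [y2 Ay2] f1 f2 hA.
have H1 : forall x2, A2 x2 -> ereal_inf A <= ereal_inf A1 + x2.
  move=> x2 Ax2; rewrite -leeBlDr; last exact: f2.
  apply/ereal_infP => x1 Ax1; rewrite leeBlDr; last exact: f2.
  exact: ereal_inf_lbound (hA _ _ Ax1 Ax2).
case Ei1 : (ereal_inf A1) => [r1| |].
- rewrite -leeBlDl //; apply/ereal_infP => x2 Ax2; rewrite leeBlDl // -Ei1.
  exact: H1.
- have := ereal_inf_lbound Ay1; rewrite Ei1 leye_eq => /eqP y1oo.
  by move: (f1 _ Ay1); rewrite y1oo.
- have := H1 _ Ay2; rewrite Ei1 addNye leeNy_eq => /eqP ->.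
  by [].
Qed.

End J.


End Aux.
Import Aux.
Unset Implicit Arguments.

Theorem proposition3 (R : realType) (alpha : R) (a1 b1 a2 b2 : nat)
  (sigma : 'M[R[i]]_(a1 * b1)) (tau : 'M[R[i]]_(a2 * b2)) :
  0 < alpha -> alpha != 1 ->
  density sigma -> density tau ->
  (sqEnt alpha (prod_state sigma tau) <= sqEnt alpha sigma + sqEnt alpha tau)%E.
Proof.
move=> _ _ ds dt; rewrite /sqEnt.
set A := [set x : \bar R | _]%classic.
set A1 := [set x : \bar R | _]%classic.
set A2 := [set x : \bar R | _]%classic.
have ne1 : exists x, A1 x.
  have [e [w [dw tw]]] := triv_ext ds.
  by exists (renyiCMI alpha w)%:E; exists e, w.
have ne2 : exists x, A2 x.
  have [e [w [dw tw]]] := triv_ext dt.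
  by exists (renyiCMI alpha w)%:E; exists e, w.
have fin1 : forall x, A1 x -> x \is a fin_num by move=> x [e [w [_ [_ ->]]]].
have fin2 : forall x, A2 x -> x \is a fin_num by move=> x [e [w [_ [_ ->]]]].
have le := inf_add ne1 ne2 fin1 fin2 (A := A) _.
have {le} le : (ereal_inf A <= ereal_inf A1 + ereal_inf A2)%E.
  apply: le => x1 x2 [e1 [w1 [d1 [t1 ->]]]] [e2 [w2 [d2 [t2 ->]]]].
  exists (e1 * e2)%N, (tensP (Sbig a1 b1 e1 a2 b2 e2) w1 w2); split.
    exact: density_tens.
  by rewrite trR_tens t1 t2 (cmi_add alpha d1 d2).
have ni1 : (ereal_inf A1 != +oo)%E.
  case: ne1 => y Ay; have := ereal_inf_lbound Ay.
  by move: (fin1 _ Ay); case: y {Ay} => // r _; case: (ereal_inf A1).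
have ni2 : (ereal_inf A2 != +oo)%E.
  case: ne2 => y Ay; have := ereal_inf_lbound Ay.
  by move: (fin2 _ Ay); case: y {Ay} => // r _; case: (ereal_inf A2).
rewrite -muleDr //; last first.
  by rewrite /adde_def; move: ni1 ni2; case: (ereal_inf A1); case: (ereal_inf A2).
apply: lee_wpmul2l => //; rewrite lee_fin invr_ge0; exact: ler0n.
Qed.
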